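(* Let $\alpha,\beta,p,q\in\mathbb{C}$ be constants with $p^2\neq q^2$, and set $s^2=\alpha^2-p^2$, $\mu^2=\alpha^2-q^2$, $t^2=\beta^2-p^2$, $\nu^2=\beta^2-q^2$. Let $h,g:\mathbb{Z}^2\to\mathbb{C}$ satisfy $\widehat{h}-\widetilde{h}=\widetilde{\widetilde{g}}-g$ and $(h+\widetilde g)g=\beta^2-\alpha^2$. Let $\varphi_1,\varphi_2$ be two linearly independent solutions of $$\widetilde{\widetilde{\varphi}}+h\,\widetilde{\varphi}+\alpha^2\varphi=p^2\varphi,\qquad \widehat{\varphi}=\widetilde{\varphi}-g\,\varphi,$$ and $\phi_1,\phi_2$ two linearly independent solutions of $$\widetilde{\widetilde{\phi}}+h\,\widetilde{\phi}+\alpha^2\phi=q^2\phi,\qquad \widehat{\phi}=\widetilde{\phi}-g\,\phi .$$ Let $\rho_1,\rho_2$ be the constants with $\varphi_1\widetilde\varphi_2-\varphi_2\widetilde\varphi_1=\rho_1 s^{2n}t^{2m}$ and $\phi_1\widetilde\phi_2-\phi_2\widetilde\phi_1=\rho_2\mu^{2n}\nu^{2m}$. Let $M=\begin{pmatrix}A&B\\C&D\end{pmatrix}$ be a constant matrix, $\langle\Phi_p|=(\varphi_1\ \ \varphi_2)$, $|\Phi_q\rangle=(\phi_1\ \ \phi_2)^{\intercal}$, and $$Y=\langle\Phi_p|M|\widetilde{\Phi}_q\rangle-\langle\widetilde{\Phi}_p|M|\Phi_q\rangle=\sum_{i,j=1}^2 M_{ij}\big(\varphi_i\widetilde{\phi}_j-\phi_j\widetilde{\varphi}_i\big).$$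 Then $Y$ satisfies the leKdV-II$(\delta)$ equation $$s^2\mu^2Y\widehat{Y}+\widetilde{Y}\widehat{\widetilde{Y}}-t^2\nu^2Y\widetilde{Y}-\widehat{Y}\widehat{\widetilde{Y}}=(\alpha^2-\beta^2)\Big(Y\widehat{\widetilde{Y}}+\widetilde{Y}\widehat{Y}+\delta\,(p^2-q^2)^2s^{2n}\mu^{2n}t^{2m}\nu^{2m}\Big)$$ with $\delta=\rho_1\rho_2\det M$.
   Context: Shift notation: for a function $f$ on $\mathbb{Z}^2$ (variables $n,m$), $\widetilde f(n,m)=f(n+1,m)$, $\widehat f(n,m)=f(n,m+1)$, and combined accents denote composed shifts; accents on vectors act componentwise. $M_{11}=A$, $M_{12}=B$, $M_{21}=C$, $M_{22}=D$. *)

(* Defs.v *)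
From mathcomp Require Import all_boot all_algebra reals.
From mathcomp Require Export complex.
Set Implicit Arguments. Unset Strict Implicit. Unset Printing Implicit Defensive.
Import GRing.Theory Num.Theory.
Local Open Scope ring_scope.

(* Shifts on functions of (n, m) in Z^2:
   tilde f (n,m) = f (n+1, m), hat f (n,m) = f (n, m+1). *)
Definition tl {T : Type} (f : int -> int -> T) : int -> int -> T :=
  fun n m => f (n + 1)%R m.
Definition ht {T : Type} (f : int -> int -> T) : int -> int -> T :=
  fun n m => f n (m + 1)%R.

Definition lin_indep2 {K : pzRingType} (f : 'I_2 -> int -> int -> K) : Prop :=
  forall c : 'I_2 -> K,
    (forall n m, \sum_(i < 2) c i * f i n m = 0) -> forall i, c i = 0.

Definition Yfun {K : pzRingType} (M : 'M[K]_2) (vphi phi : 'I_2 -> int -> int -> K)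
  : int -> int -> K :=
  fun n m => \sum_(i < 2) \sum_(j < 2)
     M i j * (vphi i n m * tl (phi j) n m - phi j n m * tl (vphi i) n m).

(* Main.v *)
Require Import Defs.
From mathcomp Require Import all_boot all_algebra reals.
From mathcomp Require Import complex.
Import GRing.Theory Num.Theory.
Local Open Scope ring_scope.
From mathcomp Require Import ring.

Lemma key (K : comPzRingType) (al be pp qq g k P Q Z Z1 : K) :
  g * k = be - al ->
  let s2 := al - pp in let mu2 := al - qq in let t2 := be - pp in let nu2 := be - qq in
  let Ph := - mu2 * Q - k * Z1 + g * mu2 * Z + g * k * P in
  let Qh := - s2 * P + g * s2 * Z - k * Z1 + g * k * Q in
  let Y := P - Q in let Yt := s2 * P - mu2 * Q in
  let Yh := Ph - Qh in let Yht := s2 * Ph - mu2 * Qh in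
  s2 * mu2 * Y * Yh + Yt * Yht - t2 * nu2 * Y * Yt - Yh * Yht
  = (al - be) * (Y * Yht + Yt * Yh + (pp - qq) ^+ 2 * (Z * Z1 - P * Q)).
Proof.
move=> H.
have -> : be = al + g * k by rewrite H; ring.
cbv zeta; ring.
Qed.

Lemma det2 (K : comPzRingType) (M : 'M[K]_2) : \det M = M 0 0 * M 1 1 - M 0 1 * M 1 0.
Proof.
rewrite (expand_det_row _ ord0) !big_ord_recl big_ord0 /cofactor !det_mx11 !mxE /=.
have e1 : lift (lift ord0 ord0) (0 : 'I_1) = 0 :> 'I_2 by apply/val_inj.
have e2 : lift ord0 (0 : 'I_1) = 1 :> 'I_2 by apply/val_inj.
have e3 : lift ord0 ord0 = 1 :> 'I_2 by apply/val_inj.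
have e4 : ord0 = 0 :> 'I_2 by apply/val_inj.
rewrite ?e1 ?e2 ?e3 ?e4 /bump /= expr0 expr1. ring.
Qed.

Lemma sum2 (K : comPzRingType) (F : 'I_2 -> K) : \sum_(i < 2) F i = F 0 + F 1.
Proof.
rewrite !big_ord_recl big_ord0 addr0.
have e3 : lift ord0 ord0 = 1 :> 'I_2 by apply/val_inj.
have e4 : ord0 = 0 :> 'I_2 by apply/val_inj.
by rewrite e3 e4.
Qed.

Lemma solve_rec (K : comPzRingType) (x y z a b w : K) :
  x + y * z + a * w = b * w -> x = - (a - b) * w - y * z.
Proof.
move=> H; have -> : x = (x + y * z + a * w) - y * z - a * w by ring.
rewrite H; ring.
Qed.
Theorem proposition4p2 (R : realType) (alpha beta p q : R[i])
  (hpq : p ^+ 2 != q ^+ 2)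
  (h g : int -> int -> R[i])
  (Hhg1 : forall n m, ht h n m - tl h n m = tl (tl g) n m - g n m)
  (Hhg2 : forall n m, (h n m + tl g n m) * g n m = beta ^+ 2 - alpha ^+ 2)
  (vphi phi : 'I_2 -> int -> int -> R[i])
  (Hv1 : forall i n m, tl (tl (vphi i)) n m + h n m * tl (vphi i) n m
                         + alpha ^+ 2 * vphi i n m = p ^+ 2 * vphi i n m)
  (Hv2 : forall i n m, ht (vphi i) n m = tl (vphi i) n m - g n m * vphi i n m)
  (Hvind : lin_indep2 vphi)
  (Hp1 : forall i n m, tl (tl (phi i)) n m + h n m * tl (phi i) n m
                         + alpha ^+ 2 * phi i n m = q ^+ 2 * phi i n m)
  (Hp2 : forall i n m, ht (phi i) n m = tl (phi i) n m - g n m * phi i n m)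
  (Hpind : lin_indep2 phi)
  (rho1 rho2 : R[i])
  (Hrho1 : forall n m, vphi 0 n m * tl (vphi 1) n m - vphi 1 n m * tl (vphi 0) n m
             = rho1 * (alpha ^+ 2 - p ^+ 2) ^ n * (beta ^+ 2 - p ^+ 2) ^ m)
  (Hrho2 : forall n m, phi 0 n m * tl (phi 1) n m - phi 1 n m * tl (phi 0) n m
             = rho2 * (alpha ^+ 2 - q ^+ 2) ^ n * (beta ^+ 2 - q ^+ 2) ^ m)
  (M : 'M[R[i]]_2) :
  let s2 := alpha ^+ 2 - p ^+ 2 in
  let mu2 := alpha ^+ 2 - q ^+ 2 in
  let t2 := beta ^+ 2 - p ^+ 2 in
  let nu2 := beta ^+ 2 - q ^+ 2 in
  let delta := rho1 * rho2 * \det M in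
  let Y := Yfun M vphi phi in
  forall n m : int,
    s2 * mu2 * Y n m * ht Y n m + tl Y n m * ht (tl Y) n m
    - t2 * nu2 * Y n m * tl Y n m - ht Y n m * ht (tl Y) n m
    = (alpha ^+ 2 - beta ^+ 2)
      * (Y n m * ht (tl Y) n m + tl Y n m * ht Y n m
         + delta * (p ^+ 2 - q ^+ 2) ^+ 2
           * s2 ^ n * mu2 ^ n * t2 ^ m * nu2 ^ m).
Proof.
move=> s2 mu2 t2 nu2 delta Y n m.
rewrite /s2 /mu2 /t2 /nu2 /delta.
have Rv : forall i n m, vphi i (n + 1 + 1) m
   = - (alpha ^+ 2 - p ^+ 2) * vphi i n m - h n m * vphi i (n + 1) m.
  by move=> i n' m'; apply: solve_rec; exact: (Hv1 i n' m').
have Rp : forall i n m, phi i (n + 1 + 1) m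
   = - (alpha ^+ 2 - q ^+ 2) * phi i n m - h n m * phi i (n + 1) m.
  by move=> i n' m'; apply: solve_rec; exact: (Hp1 i n' m').
have Hv2' : forall i n m, vphi i n (m + 1) = vphi i (n + 1) m - g n m * vphi i n m.
  by move=> i n' m'; exact: (Hv2 i n' m').
have Hp2' : forall i n m, phi i n (m + 1) = phi i (n + 1) m - g n m * phi i n m.
  by move=> i n' m'; exact: (Hp2 i n' m').
pose Pf n m := \sum_(i < 2) \sum_(j < 2) M i j * (vphi i n m * phi j (n + 1) m).
pose Qf n m := \sum_(i < 2) \sum_(j < 2) M i j * (vphi i (n + 1) m * phi j n m).
pose Zf n m := \sum_(i < 2) \sum_(j < 2) M i j * (vphi i n m * phi j n m).
pose Z1f n m := \sum_(i < 2) \sum_(j < 2) M i j * (vphi i (n + 1) m * phi j (n + 1) m).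
have Yb : forall n m, Y n m = Pf n m - Qf n m.
  by move=> n' m'; rewrite /Y /Yfun /Pf /Qf !sum2 /tl /=; ring.
have Yt : forall n m, tl Y n m = (alpha ^+ 2 - p ^+ 2) * Pf n m - (alpha ^+ 2 - q ^+ 2) * Qf n m.
  by move=> n' m'; rewrite /tl /Y /Yfun /Pf /Qf !sum2 /tl /= !Rv !Rp; ring.
pose k := h n m + g (n + 1) m.
have Ph : Pf n (m + 1) = - (alpha ^+ 2 - q ^+ 2) * Qf n m - k * Z1f n m
    + g n m * (alpha ^+ 2 - q ^+ 2) * Zf n m + g n m * k * Pf n m.
  by rewrite /Pf /Qf /Zf /Z1f /k !sum2 !Hv2' !Hp2' ?Rv ?Rp; ring.
have Qh : Qf n (m + 1) = - (alpha ^+ 2 - p ^+ 2) * Pf n m + g n m * (alpha ^+ 2 - p ^+ 2) * Zf n m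
    - k * Z1f n m + g n m * k * Qf n m.
  by rewrite /Pf /Qf /Zf /Z1f /k !sum2 !Hv2' !Hp2' ?Rv ?Rp; ring.
have W : Zf n m * Z1f n m - Pf n m * Qf n m
    = \det M * (vphi 0 n m * tl (vphi 1) n m - vphi 1 n m * tl (vphi 0) n m)
             * (phi 0 n m * tl (phi 1) n m - phi 1 n m * tl (phi 0) n m).
  by rewrite det2 /Pf /Qf /Zf /Z1f !sum2 /tl /=; ring.
rewrite Hrho1 Hrho2 in W.
have Hgk : g n m * k = beta ^+ 2 - alpha ^+ 2 by rewrite /k mulrC; exact: Hhg2.
have -> : rho1 * rho2 * \det M * (p ^+ 2 - q ^+ 2) ^+ 2 * (alpha ^+ 2 - p ^+ 2) ^ n *
       (alpha ^+ 2 - q ^+ 2) ^ n * (beta ^+ 2 - p ^+ 2) ^ m * (beta ^+ 2 - q ^+ 2) ^ m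
   = (p ^+ 2 - q ^+ 2) ^+ 2 * (Zf n m * Z1f n m - Pf n m * Qf n m) by rewrite W; ring.
have E1 : ht Y n m = Pf n (m + 1) - Qf n (m + 1) by exact: Yb.
have E2 : ht (tl Y) n m = (alpha ^+ 2 - p ^+ 2) * Pf n (m + 1) - (alpha ^+ 2 - q ^+ 2) * Qf n (m + 1)
  by exact: Yt.
rewrite E1 E2 Yb Yt Ph Qh.
clearbody Pf Qf Zf Z1f k.
have K := @key _ (alpha ^+ 2) (beta ^+ 2) (p ^+ 2) (q ^+ 2) (g n m) k (Pf n m) (Qf n m) (Zf n m) (Z1f n m) Hgk; cbv zeta in K.
move/eqP: K; rewrite -subr_eq0 => /eqP K0.
apply/eqP; rewrite -subr_eq0; apply/eqP; rewrite -[RHS]K0; ring.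
Qed.
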